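(* Let $d\ge2$, $p_c(\mathbb{Z}^d)<p\le 1$, and let $c_1,c_2,c_3,c_4,c_5>0$. There exists a constant $C=C(c_1,c_2,c_3,c_4,c_5,d,p)>0$ such that for every $n$, every $\omega\in H_n(c_1,c_2,c_3,c_4,c_5)$ and every edge $e\in\mathbb{E}_d(n)$, \[ |\phi(n)(\omega)-\phi(n)(\omega^e)|\le \frac{C}{n^d}. \]
   Context: Let $\mathbb{T}^d(n)=\mathbb{Z}^d/n\mathbb{Z}^d$ with edge set $\mathbb{E}_d(n)$, $\Omega=\{0,1\}^{\mathbb{E}_d(n)}$ with the Bernoulli($p$) product measure; $e$ is open in $\omega$ if $\omega(e)=1$. $C_d(n)(\omega)$ is the largest open connected component (ties broken by a fixed deterministic rule). For $e\in\mathbb{E}_d(n)$, $\omega^e$ agrees with $\omega$ off $e$ and $\omega^e(e)=1-\omega(e)$. For a nonempty vertex set $A\subset C_d(n)(\eta)$, $\psi_A(\eta)=|\partial A(\eta)|/|A|$ where $\partial A(\eta)$ is the set of edges open in $\eta$ with exactly one endpoint in $A$; the Cheeger constant is $\phi(n)(\eta)=\min\{\psi_A(\eta):\emptyset\ne A\subset C_d(n)(\eta),\ |A|\le|C_d(n)(\eta)|/2\}$; such $A$ are called admissible for $\eta$. Define the events $H^1_n(c_1)=\{|C_d(n)(\omega)|>c_1n^d\}$; $H^2_n(c_2,c_3)=\{c_2/n<\phi(n)(\omega)<c_3/n\}$; $H^3_n=\{\forall e\in\mathbb{E}_d(n):\ |C_d(n)(\omega)\triangle C_d(n)(\omega^e)|\le\sqrt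 n\}$; $H^4_n(c_4)=\{\exists A$ admissible for $\omega$ with $|A|>c_4n^d$ and $\psi_A(\omega)=\phi(n)(\omega)\}$; $H^5_n(c_5)=\{\forall e\in\mathbb{E}_d(n)\ \exists A$ admissible for $\omega^e$ with $|A|>c_5n^d$ and $\psi_A(\omega^e)=\phi(n)(\omega^e)\}$; and $H_n(c_1,\dots,c_5)=H^1_n(c_1)\cap H^2_n(c_2,c_3)\cap H^3_n\cap H^4_n(c_4)\cap H^5_n(c_5)$. *)

(* Defs.v *)
From HB Require Import structures.
From mathcomp Require Import all_boot all_order all_algebra.
Set Implicit Arguments. Unset Strict Implicit. Unset Printing Implicit Defensive.
Import Order.TTheory GRing.Theory Num.Theory.

Section Torus.
Variables n d : nat.

(* Vertices of T^d(n) = Z^d / nZ^d : functions 'I_d -> 'I_n (coordinates mod n). *)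
Definition vtx := {ffun 'I_d -> 'I_n}.

Definition nbr (x y : vtx) : bool :=
  [exists i : 'I_d, (val (y i) == (val (x i)).+1 %% n) &&
                    [forall j : 'I_d, (j != i) ==> (y j == x j)]].

Definition is_edge (f : {set vtx}) : bool :=
  [exists x : vtx, exists y : vtx, [&& f == [set x; y], nbr x y & x != y]].

Definition edge := {f : {set vtx} | is_edge f}.

(* configurations omega in {0,1}^{E_d(n)}; omega f = true means f is open *)
Definition config := {ffun edge -> bool}.

Definition flip (w : config) (e : edge) : config :=
  [ffun f => if f == e then ~~ w f else w f].

Definition oadj (w : config) : rel vtx :=
  fun x y => [exists f : edge, w f && (val f == [set x; y])].

Definition cluster (w : config) (x : vtx) : {set vtx} :=
  [set y | connect (oadj w) x y].

(* LC is a (deterministic) rule selecting a largest open cluster *)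
Definition largest_cluster_rule (LC : config -> {set vtx}) : Prop :=
  forall w, (exists x, LC w = cluster w x) /\
            (forall x, #|cluster w x| <= #|LC w|)%N.

Definition bd (w : config) (A : {set vtx}) : {set edge} :=
  [set f : edge | w f && (#|val f :&: A| == 1)%N].

Definition admissible (LC : config -> {set vtx}) (w : config) (A : {set vtx}) : bool :=
  [&& A != set0, A \subset LC w & (#|A|.*2 <= #|LC w|)%N].

Variable R : realFieldType.
Local Open Scope ring_scope.

Definition psi (w : config) (A : {set vtx}) : R := (#|bd w A|)%:R / (#|A|)%:R.

(* Cheeger constant: minimum of psi over admissible sets (0 if there are none,
   a case that never occurs under the hypotheses of the theorem). *)
Definition phi (LC : config -> {set vtx}) (w : config) : R :=
  match [pick A | admissible LC w A] with
  | Some A0 => \big[Num.min/psi w A0]_(A | admissible LC w A) psi w A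
  | None => 0
  end.

Definition H1 (LC : config -> {set vtx}) (c1 : R) (w : config) : Prop :=
  c1 * (n ^ d)%:R < (#|LC w|)%:R.
Definition H2 (LC : config -> {set vtx}) (c2 c3 : R) (w : config) : Prop :=
  c2 / n%:R < phi LC w /\ phi LC w < c3 / n%:R.
(* |C(w) Δ C(w^e)| <= sqrt n, written as |.|^2 <= n *)
Definition H3 (LC : config -> {set vtx}) (w : config) : Prop :=
  forall e : edge,
    ((#|(LC w :\: LC (flip w e)) :|: (LC (flip w e) :\: LC w)|) ^ 2 <= n)%N.
Definition H4 (LC : config -> {set vtx}) (c4 : R) (w : config) : Prop :=
  exists A, [/\ admissible LC w A, c4 * (n ^ d)%:R < (#|A|)%:R & psi w A = phi LC w].
Definition H5 (LC : config -> {set vtx}) (c5 : R) (w : config) : Prop :=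
  forall e : edge, exists A,
    [/\ admissible LC (flip w e) A, c5 * (n ^ d)%:R < (#|A|)%:R
      & psi (flip w e) A = phi LC (flip w e)].
Definition Hn (LC : config -> {set vtx}) (c1 c2 c3 c4 c5 : R) (w : config) : Prop :=
  [/\ H1 LC c1 w, H2 LC c2 c3 w, H3 LC w, H4 LC c4 w & H5 LC c5 w].

End Torus.

(* Main.v *)
Require Import Defs.
From HB Require Import structures.
From mathcomp Require Import all_boot all_order all_algebra.
From mathcomp Require Import ring lra zify.
Import Order.TTheory GRing.Theory Num.Theory.
Set Implicit Arguments. Unset Strict Implicit. Unset Printing Implicit Defensive.

Section L.
Variables (n d : nat).
Local Notation V := (vtx n d).
Local Notation E := (edge n d).
Local Notation cfg := (config n d).

Lemma edge_two (f : E) : exists a b : V, val f = [set a; b] /\ a != b.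
Proof.
case: f => f /= /existsP [a /existsP [b /and3P [/eqP -> _ hab]]].
by exists a, b.
Qed.

Lemma card_edge2 (f : E) : #|val f| = 2.
Proof. by have [a [b [-> hab]]] := edge_two f; rewrite cards2 hab. Qed.

Lemma edge_conn (u : cfg) (f : E) x y :
  u f -> x \in val f -> y \in val f -> connect (oadj u) x y.
Proof.
move=> uf.
have [a [b [hf hab]]] := edge_two f.
rewrite hf !inE => /orP [] /eqP -> /orP [] /eqP ->; try exact: connect0;
 apply: connect1; apply/existsP; exists f; rewrite uf hf /=.
- exact: eqxx.
- by rewrite setUC eqxx.
Qed.

Lemma oadj_sym (u : cfg) : symmetric (oadj u).
Proof.
move=> x y; apply/existsP/existsP => [] [f /andP [uf /eqP hf]];
  exists f; by rewrite uf hf setUC eqxx.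
Qed.

Lemma cluster_closed (u : cfg) z (f : E) x y :
  u f -> x \in val f -> y \in val f -> x \in cluster u z -> y \in cluster u z.
Proof.
move=> uf hx hy; rewrite !inE => hzx.
by apply: connect_trans hzx (edge_conn uf hx hy).
Qed.

Lemma cluster_sub (u v : cfg) x y :
  (forall f, u f -> v f) ->
  (exists z, z \in cluster u x :&: cluster v y) -> cluster u x \subset cluster v y.
Proof.
move=> uv [z]; rewrite !inE => /andP [hxz hyz].
have sub : forall a b, connect (oadj u) a b -> connect (oadj v) a b.
  apply: connect_sub => a b /existsP [f /andP [uf hf]].
  by apply: connect1; apply/existsP; exists f; rewrite uv.
apply/subsetP => t; rewrite !inE => hxt.
apply: connect_trans hyz _.
apply: sub.
rewrite (sym_connect_sym (oadj_sym u)) in hxz.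
exact: connect_trans hxz hxt.
Qed.

Lemma bd_grow (u v : cfg) (e : E) B :
  (forall f, v f -> f != e -> u f) ->
  #|bd v B| <= #|bd u B| + 1.
Proof.
move=> vu.
apply: (leq_trans (n := #|bd u B :|: [set e]|)).
  apply: subset_leq_card; apply/subsetP => f; rewrite inE => /andP [vf hc].
  rewrite in_setU in_set1.
  case: (eqVneq f e) => [_|fe]; first by rewrite orbT.
  by rewrite orbF inE vu.
by rewrite (leq_trans (leq_card_setU _ _)) // cards1.
Qed.

Lemma closed_meet (u : cfg) z (f : E) :
  u f -> (exists x, x \in val f :&: cluster u z) -> val f \subset cluster u z.
Proof.
move=> uf [x]; rewrite inE => /andP [hx hxc].
apply/subsetP => y hy; exact: cluster_closed uf hx hy hxc.
Qed.

Lemma bd_shrink1 (u v : cfg) z A :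
  (forall f, u f -> v f) ->
  bd u (A :&: cluster u z) \subset bd v A.
Proof.
move=> uv; apply/subsetP => f; rewrite !inE => /andP [uf hc].
rewrite uv //=.
have: exists x, x \in val f :&: cluster u z.
  have: 0 < #|val f :&: (A :&: cluster u z)| by rewrite (eqP hc).
  move/card_gt0P => [x]; rewrite !inE => /and3P [a _ c]; exists x; by rewrite !inE a c.
move/(closed_meet uf) => sub.
suff -> : val f :&: A = val f :&: (A :&: cluster u z) by [].
apply/setP => t; rewrite !in_setI ?in_setD; case ht: (t \in val f) => //=.
by rewrite (subsetP sub t ht) andbT.
Qed.

Lemma bd_shrink2 (u v : cfg) z A :
  (forall f, u f -> v f) ->
  bd u (cluster u z :\: A) \subset bd v A.
Proof.
move=> uv; apply/subsetP => f; rewrite !inE => /andP [uf hc].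
rewrite uv //=.
have: exists x, x \in val f :&: cluster u z.
  have: 0 < #|val f :&: (cluster u z :\: A)| by rewrite (eqP hc).
  move/card_gt0P => [x]; rewrite in_setI in_setD => /and3P [a b c]; exists x; by rewrite in_setI a c.
move/(closed_meet uf) => sub.
have hE1 : val f :&: (cluster u z :\: A) = val f :\: A.
  apply/setP => t; rewrite !in_setI ?in_setD; case ht: (t \in val f); rewrite /= ?andbF //.
  by rewrite (subsetP sub t ht) /= ?andbT.
have := cardsID A (val f); rewrite card_edge2 -hE1 (eqP hc).
by move=> /eqP; rewrite -[2]/(1+1) eqn_add2r.
Qed.

End L.


Section L2.
Variables (n d : nat) (R : realFieldType).
Local Notation V := (vtx n d).
Local Notation E := (edge n d).
Local Notation cfg := (config n d).
Local Open Scope ring_scope.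

Lemma psi_ge0 (w : cfg) A : 0 <= psi R w A.
Proof. by rewrite /psi divr_ge0 ?ler0n. Qed.

Lemma phi_le LC (w : cfg) A : admissible LC w A -> phi R LC w <= psi R w A.
Proof.
move=> hA; rewrite /phi; case: pickP => [A0 hA0|]; last by move/(_ A); rewrite hA.
exact: bigmin_le_cond.
Qed.

Lemma phi_ge0 LC (w : cfg) : 0 <= phi R LC w.
Proof.
rewrite /phi; case: pickP => [A0 hA0|_]; last by [].
apply: le_bigmin => [|i _]; exact: psi_ge0.
Qed.

Lemma card_edges : (#|{: E}| <= (#|{: V}| * #|{: V}|).+1)%N.
Proof.
pose g (f : E) := [pick p : V * V | val f == [set p.1; p.2]].
have gs : forall f, exists p, g f = Some p /\ val f = [set p.1; p.2].
  move=> f; rewrite /g; case: pickP => [p hp|hn].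
    by exists p; rewrite (eqP hp).
  have [a [b [hf _]]] := edge_two f.
  by move: (hn (a, b)); rewrite /= hf eqxx.
have gi : injective g.
  move=> f1 f2 e12; apply: val_inj.
  have [p1 [g1 v1]] := gs f1; have [p2 [g2 v2]] := gs f2.
  by move: e12; rewrite g1 g2 v1 v2 => [[->]].
have := leq_card g gi.
by rewrite card_option card_prod.
Qed.

Lemma psi_le_edges (w : cfg) A : psi R w A <= #|{: E}|%:R.
Proof.
rewrite /psi; have [->|hA] := eqVneq #|A| 0%N.
  by rewrite invr0 mulr0 ler0n.
rewrite ler_pdivrMr ?ltr0n ?lt0n //.
apply: (le_trans (y := #|{: E}|%:R)).
  by rewrite ler_nat max_card.
by rewrite ler_peMr ?ler0n // ler1n lt0n.
Qed.

Lemma phi_le_edges LC (w : cfg) : phi R LC w <= #|{: E}|%:R.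
Proof.
rewrite /phi; case: pickP => [A0 hA0|_]; last by rewrite ler0n.
apply: le_trans (psi_le_edges w A0).
exact: bigmin_le_cond.
Qed.

Lemma grow_phi (LC : cfg -> {set V}) (u v : cfg) (e : E) A :
  (forall f, v f -> f != e -> u f) ->
  LC u \subset LC v ->
  admissible LC u A ->
  phi R LC v <= psi R u A + 1 / #|A|%:R.
Proof.
move=> vu sub hA.
have hA' : admissible LC v A.
  move: hA => /and3P [a b c]; apply/and3P; split => //.
    exact: subset_trans b sub.
  exact: leq_trans c (subset_leq_card sub).
apply: le_trans (phi_le hA') _.
rewrite /psi -mulrDl ler_wpM2r ?invr_ge0 ?ler0n //.
by rewrite -(natrD _ _ 1) ler_nat (bd_grow A vu).
Qed.

Lemma shrink_set (LC : cfg -> {set V}) (u v : cfg) z A :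
  (forall f, u f -> v f) ->
  LC u = cluster u z -> LC u \subset LC v ->
  admissible LC v A ->
  (#|LC v :\: LC u| < #|A|)%N ->
  exists B, [/\ admissible LC u B, (#|bd u B| <= #|bd v A|)%N &
               (#|A| <= #|B| + #|LC v :\: LC u|)%N].
Proof.
move=> uv hz sub /and3P [hA0 hAs hAc] hk.
have bs1 := bd_shrink1 z A uv; have bs2 := bd_shrink2 z A uv.
rewrite -hz in bs1 bs2.
rewrite /admissible.
move: hz sub hAs hAc hk bs1 bs2; set S := LC u; set T := LC v => hz sub hAs hAc hk bs1 bs2.
move: hk; set k := #|T :\: S| => hk.
have cardT : #|T| = (#|S| + k)%N by rewrite /k cardsD (setIidPr sub) subnKC // subset_leq_card.
have h1 : (#|A| <= #|A :&: S| + k)%N.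
  rewrite -(cardsID S A) leq_add2l /k subset_leq_card //.
  by apply: setSD.
have hB1 : (#|A :&: S| <= #|A|)%N by rewrite subset_leq_card // subsetIl.
clearbody k.
case: (leqP (#|A :&: S|).*2 #|S|) => hc.
- exists (A :&: S); split => //.
  + apply/and3P; split => //; last by rewrite subsetIr.
    by rewrite -card_gt0; lia.
  + by apply: subset_leq_card; exact: bs1.
- have hcS := cardsID A S.
  have cS2 : #|S :\: A| = (#|S| - #|A :&: S|)%N.
    by rewrite cardsD setIC.
  exists (S :\: A); split.
  + apply/and3P; split; last by rewrite cS2; lia.
      by rewrite -card_gt0 cS2; lia.
    by rewrite subsetDl.
  + by apply: subset_leq_card; exact: bs2.
  + rewrite cS2; lia.
Qed.

End L2.

Local Open Scope ring_scope.

Lemma arith_shrink (R : realFieldType) (x y z a k T cN : R) :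
  0 <= x -> x <= y -> 0 <= k -> 0 < cN -> cN <= a -> 2 * k <= cN ->
  a <= z + k -> (y / a) * k <= T -> 0 <= T ->
  x / z <= y / a + 2 * T / cN.
Proof.
move=> hx hxy hk hc hca hkc haz hT hT0.
have ha : 0 < a by apply: lt_le_trans hca.
have hz : cN <= 2 * z by lra.
have hz0 : 0 < z by lra.
set p := y / a.
have hp : 0 <= p by rewrite /p divr_ge0 //; lra.
have hy : y = p * a by rewrite /p mulrVK // unitfE; lra.
rewrite ler_pdivrMr //.
have -> : (p + 2 * T / cN) * z = p * z + T * (2 * z / cN) by field; lra.
have h1 : 1 <= 2 * z / cN by rewrite ler_pdivlMr // mul1r.
have h2 : T <= T * (2 * z / cN) by rewrite ler_peMr.
have h3 : p * a <= p * z + p * k by rewrite -mulrDr ler_wpM2l.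
rewrite hy in hxy; rewrite -/p in hT; lra.
Qed.

Lemma inv_le (R : realFieldType) (a b : R) : 0 < b -> b <= a -> 1 / a <= 1 / b.
Proof.
move=> hb hba; have ha : 0 < a by apply: lt_le_trans hba.
by rewrite !div1r lef_pV2 ?posrE.
Qed.

Lemma pk_le (R : realFieldType) (p q m k : R) :
  0 <= p -> 0 < m -> p <= q / m -> 0 <= k -> k <= m -> 0 <= q -> p * k <= q.
Proof.
move=> hp hm hpq hk hkm hq.
apply: (le_trans (y := q / m * k)); first by rewrite ler_wpM2r.
apply: (le_trans (y := q / m * m)); first by rewrite ler_wpM2l // divr_ge0 // ltW.
by rewrite divfK // gt_eqF.
Qed.

Lemma le_divN (R : realFieldType) (N D C : R) : 0 < N -> D <= C -> D / N <= C / N.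
Proof. by move=> hN hDC; rewrite ler_pM2r ?invr_gt0. Qed.

Lemma cardV n d : #|{: vtx n d}| = (n ^ d)%N.
Proof. by rewrite /vtx card_ffun !card_ord. Qed.

Unset Implicit Arguments.
Theorem claim2p3 (R : realFieldType) (d : nat) (hd : (2 <= d)%N)
    (c1 c2 c3 c4 c5 : R)
    (h1 : 0 < c1) (h2 : 0 < c2) (h3 : 0 < c3) (h4 : 0 < c4) (h5 : 0 < c5) :
  exists C : R, 0 < C /\
    forall (n : nat) (LC : config n d -> {set vtx n d}),
      (0 < n)%N -> largest_cluster_rule LC ->
      forall (w : config n d), Hn LC c1 c2 c3 c4 c5 w ->
      forall (e : edge n d),
        `|phi R LC w - phi R LC (flip w e)| <= C / (n ^ d)%:R.
Proof.
pose K := 2/c1 + 2/c4 + 2/c5.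
have i1 : 0 < 1/c1 by rewrite divr_gt0.
have i4 : 0 < 1/c4 by rewrite divr_gt0.
have i5 : 0 < 1/c5 by rewrite divr_gt0.
have K0 : 0 <= K by rewrite /K; lra.
pose M := K ^+ d.
have M0 : 0 <= M by rewrite /M exprn_ge0.
pose C := 1/c4 + 1/c5 + 2*c3/c4 + 2*(c3 + 1/c4)/c5 + 2*(M*M+1)*M.
have j1 : 0 <= 2*c3/c4 by rewrite divr_ge0 //; lra.
have j2 : 0 <= 2*(c3 + 1/c4)/c5 by rewrite divr_ge0 //; lra.
have j3 : 0 <= 2*(M*M+1)*M by rewrite !mulr_ge0 //; nra.
exists C; split; first by rewrite /C; lra.
move=> n LC hn hLC w [hH1 [hH2a hH2b] hH3 hH4 hH5] e.
have hnR : 0 < n%:R :> R by rewrite ltr0n.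
have hd1 : (1 <= d)%N by apply: leq_trans hd.
have hnN : (n <= n ^ d)%N.
  by apply: leq_trans (leq_pexp2l hn hd1); rewrite expn1.
have hn2N : (n ^ 2 <= n ^ d)%N by exact: leq_pexp2l hn hd.
set Nn := (n ^ d)%:R : R.
have hN1 : 1 <= Nn by rewrite /Nn ler1n expn_gt0 hn.
have hN0 : 0 < Nn by lra.
have hnNR : n%:R <= Nn by rewrite /Nn ler_nat.
have hn2NR : n%:R * n%:R <= Nn by rewrite /Nn -natrM mulnn ler_nat.
have phiE : forall w', 0 <= phi R LC w' <= Nn * Nn + 1.
  move=> w'; rewrite phi_ge0 /=; apply: le_trans (phi_le_edges _ _ _) _.
  have := card_edges n d; rewrite cardV -(ler_nat R) -addn1 natrD natrM => hE.
  by rewrite -/Nn; lra.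
set phi0 := phi R LC w; set phi1 := phi R LC (flip w e).
suff [D1 D2] : phi1 <= phi0 + C / Nn /\ phi0 <= phi1 + C / Nn.
  by rewrite ler_norml; apply/andP; split; lra.
case: (boolP [&& 2 <= c1 * n%:R, 2 <= c4 * n%:R & 2 <= c5 * n%:R]) => [/and3P [l1 l4 l5]|hsmall].
  set L := LC w; set L' := LC (flip w e).
  set k := #|(L :\: L') :|: (L' :\: L)|.
  have hk2 : (k ^ 2 <= n)%N by exact: hH3 e.
  have hkn : (k <= n)%N.
    by apply: leq_trans hk2; rewrite -mulnn; case: (k) => // k'; rewrite leq_pmulr.
  have hkR : k%:R <= n%:R :> R by rewrite ler_nat.
  have hk0 : 0 <= k%:R :> R by rewrite ler0n.
  have ck : forall c, 0 < c -> 2 <= c * n%:R -> 2 * k%:R <= c * Nn.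
    move=> c hc hl.
    have a : 2 * n%:R <= (c * n%:R) * n%:R := ler_wpM2r (ltW hnR) hl.
    have b : c * (n%:R * n%:R) <= c * Nn := ler_wpM2l (ltW hc) hn2NR.
    rewrite mulrA in b; clear -a b hkR; lra.
  have c1k := ck _ h1 l1; have c4k := ck _ h4 l4; have c5k := ck _ h5 l5.
  have [x hx] := (hLC w).1; have [y hy] := (hLC (flip w e)).1.
  rewrite -/L in hx; rewrite -/L' in hy.
  have ov : L :&: L' != set0.
    apply/negP => /eqP h0.
    have : (#|L| <= k)%N.
      apply: subset_leq_card; apply/subsetP => t ht.
      rewrite in_setU in_setD ht andbT; apply/orP; left.
      apply/negP => ht'; have : t \in L :&: L' by rewrite in_setI ht ht'.
      by rewrite h0 in_set0.
    rewrite -(ler_nat R) => hLk.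
    move: hH1; rewrite /H1 -/L -/Nn; lra.
  have [z hz] := set0Pn _ ov.
  have [A [hA hAbig hApsi]] := hH4.
  have [A' [hA' hA'big hA'psi]] := hH5 e.
  rewrite /H4 /H5 -/Nn in hAbig hA'big.
  rewrite -/phi0 in hApsi; rewrite -/phi1 in hA'psi.
  have hAR : 0 < #|A|%:R :> R by lra.
  have hA'R : 0 < #|A'|%:R :> R by lra.
  have bigA : 1 / #|A|%:R <= (1/c4) / Nn.
    have -> : (1/c4)/Nn = 1/(c4*Nn) by field; rewrite ?(gt_eqF h4) ?(gt_eqF h5) ?(gt_eqF hN0).
    by apply: inv_le; rewrite ?mulr_gt0 //; apply: ltW.
  have bigA' : 1 / #|A'|%:R <= (1/c5) / Nn.
    have -> : (1/c5)/Nn = 1/(c5*Nn) by field; rewrite ?(gt_eqF h4) ?(gt_eqF h5) ?(gt_eqF hN0).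
    by apply: inv_le; rewrite ?mulr_gt0 //; apply: ltW.
  have hph0 : 0 <= phi0 by exact: phi_ge0.
  have hph1 : 0 <= phi1 by exact: phi_ge0.
  have e1 : (1/c4)/Nn <= C/Nn by apply: le_divN => //; rewrite /C; clear -j1 j2 j3 i4 i5; lra.
  have e2 : (1/c5)/Nn <= C/Nn by apply: le_divN => //; rewrite /C; clear -j1 j2 j3 i4 i5; lra.
  have e3 : 2 * c3 / (c4 * Nn) <= C/Nn.
    have -> : 2 * c3 / (c4 * Nn) = (2 * c3 / c4) / Nn by field; rewrite ?(gt_eqF h4) ?(gt_eqF h5) ?(gt_eqF hN0).
    by apply: le_divN => //; rewrite /C; clear -j1 j2 j3 i4 i5; lra.
  have e4 : 2 * (c3 + 1/c4) / (c5 * Nn) <= C/Nn.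
    have -> : 2 * (c3 + 1/c4) / (c5 * Nn) = (2 * (c3 + 1/c4) / c5) / Nn by field; rewrite ?(gt_eqF h4) ?(gt_eqF h5) ?(gt_eqF hN0).
    by apply: le_divN => //; rewrite /C; clear -j1 j2 j3 i4 i5; lra.
  have ph0n : phi0 <= c3 / n%:R by apply: ltW; exact: hH2b.
  case he: (w e).
  - have uv : forall f, flip w e f -> w f.
      by move=> f; rewrite ffunE; case: eqVneq => [->|_] //; rewrite he.
    have vu : forall f, w f -> f != e -> flip w e f.
      by move=> f wf fe; rewrite ffunE (negbTE fe).
    have subL : L' \subset L.
      rewrite hx hy; apply: cluster_sub uv _; exists z.
      by rewrite -hx -hy setIC.
    set k0 := #|L :\: L'|.
    have hk0N : (k0 <= k)%N by apply: subset_leq_card; exact: subsetUl.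
    have hk0R : k0%:R <= k%:R :> R by rewrite ler_nat.
    have hk00 : 0 <= k0%:R :> R by rewrite ler0n.
    split.
    + have hlt : (k0 < #|A|)%N by rewrite -(ltr_nat R); lra.
      have [B [hB hbd hAB]] := shrink_set (LC := LC) uv hy subL hA hlt.
      apply: le_trans (phi_le R hB) _.
      rewrite /psi; move: hApsi; rewrite /psi => hApsi.
      rewrite -hApsi.
      apply: le_trans (arith_shrink (x := #|bd (flip w e) B|%:R) (y := #|bd w A|%:R) (z := #|B|%:R) (a := #|A|%:R) (T := c3) (cN := c4 * Nn) (k := k0%:R) _ _ _ _ _ _ _ _ _) _.
      * exact: ler0n.
      * by rewrite ler_nat.
      * exact: hk00.
      * by rewrite mulr_gt0.
      * lra.
      * lra.
      * by rewrite -natrD ler_nat.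
      * rewrite hApsi; apply: (pk_le (m := n%:R)) => //; lra.
      * lra.
      * lra.
    + have G := grow_phi R (LC := LC) (u := flip w e) (v := w) vu subL hA'.
      rewrite hA'psi in G; have G' : phi0 <= phi1 + 1 / #|A'|%:R := G; clear -G' bigA' e2; lra.
  - have uv : forall f, w f -> flip w e f.
      by move=> f; rewrite ffunE; case: eqVneq => [->|_] //; rewrite he.
    have vu : forall f, flip w e f -> f != e -> w f.
      by move=> f; rewrite ffunE; case: eqVneq.
    have subL : L \subset L'.
      rewrite hx hy; apply: cluster_sub uv _; exists z.
      by rewrite -hx -hy.
    have subL2 : LC w \subset LC (flip w e) := subL.
    set k0 := #|L' :\: L|.
    have hk0N : (k0 <= k)%N by apply: subset_leq_card; exact: subsetUr.
    have hk0R : k0%:R <= k%:R :> R by rewrite ler_nat.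
    have hk00 : 0 <= k0%:R :> R by rewrite ler0n.
    have D1 : phi1 <= phi0 + (1/c4)/Nn.
      have G := grow_phi R (LC := LC) (u := w) (v := flip w e) vu subL2 hA.
      rewrite hApsi in G; have G' : phi1 <= phi0 + 1 / #|A|%:R := G; clear -G' bigA; lra.
    split; first lra.
    have hlt : (k0 < #|A'|)%N by rewrite -(ltr_nat R); lra.
    have [B [hB hbd hAB]] := shrink_set (LC := LC) (u := w) (v := flip w e) uv hx subL2 hA' hlt.
    apply: le_trans (phi_le R hB) _.
    rewrite /psi; move: hA'psi; rewrite /psi => hA'psi.
    rewrite -hA'psi.
    have T1 : phi0 * k0%:R <= c3 by apply: (pk_le (m := n%:R)) => //; lra.
    have T2 : (1/c4)/Nn * k0%:R <= 1/c4 by apply: (pk_le (m := Nn)) => //; rewrite ?divr_ge0 //; lra.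
    have T3 : phi1 * k0%:R <= (phi0 + (1/c4)/Nn) * k0%:R by rewrite ler_wpM2r.
    apply: le_trans (arith_shrink (x := #|bd w B|%:R) (y := #|bd (flip w e) A'|%:R) (z := #|B|%:R) (a := #|A'|%:R) (T := c3 + 1/c4) (cN := c5 * Nn) (k := k0%:R) _ _ _ _ _ _ _ _ _) _.
    * exact: ler0n.
    * by rewrite ler_nat.
    * exact: hk00.
    * by rewrite mulr_gt0.
    * lra.
    * lra.
    * by rewrite -natrD ler_nat.
    * rewrite hA'psi; lra.
    * lra.
    * lra.
have nK : n%:R <= K.
  move: hsmall; rewrite !negb_and -!ltNge => /or3P [] hs.
  - have : n%:R < 2 / c1 by rewrite ltr_pdivlMr // mulrC.
    rewrite /K; lra.
  - have : n%:R < 2 / c4 by rewrite ltr_pdivlMr // mulrC.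
    rewrite /K; lra.
  - have : n%:R < 2 / c5 by rewrite ltr_pdivlMr // mulrC.
    rewrite /K; lra.
have NM : Nn <= M.
  rewrite /Nn natrX /M; apply: lerXn2r; rewrite ?nnegrE ?ler0n //.
have key : Nn * Nn + 1 <= C / Nn.
  rewrite ler_pdivlMr //.
  have : (Nn * Nn + 1) * Nn <= (M * M + 1) * M.
    have hNN : Nn * Nn <= M * M by nra.
    nra.
  rewrite /C; lra.
have := phiE w; have := phiE (flip w e); rewrite -/phi0 -/phi1.
have : 0 <= C / Nn by rewrite divr_ge0 //; rewrite /C; lra.
move=> hC0 /andP [a1 a2] /andP [b1 b2]; split; lra.
Qed.
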